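(* Let $n\ge 2$ be a power of 2. Then $\mathsf{Pat}^{\mathsf{M}}(\mathsf{ADDR}_n) \geq 2^n$.
   Context: $\mathsf{ADDR}_n:\{0,1\}^{\log n+n}\to\{0,1\}$ is $\mathsf{ADDR}_n(x,y)=y_{\mathsf{bin}(x)}$ for $x\in\{0,1\}^{\log n}$, $y\in\{0,1\}^n$, where $\mathsf{bin}(x)\in[n]$ is the integer whose binary representation is $x$. For a Boolean function $f$ on $m$ variables with unique M\''obius expansion $f=\sum_{S\subseteq[m]}\widetilde f(S)\mathsf{AND}_S$ ($\mathsf{AND}_S(z)=\prod_{i\in S}z_i$, real coefficients) and M\''obius support $\mathcal S_f=\{S:\widetilde f(S)\neq0\}$, the pattern of an input $z$ is $(\mathsf{AND}_S(z))_{S\in\mathcal S_f}$, and $\mathsf{Pat}^{\mathsf{M}}(f)$ is the number of distinct patterns over all inputs. *)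

(* Defs.v *)
From mathcomp Require Import all_boot all_order all_algebra.
Set Implicit Arguments. Unset Strict Implicit. Unset Printing Implicit Defensive.
Import GRing.Theory Num.Theory.

Definition input (m : nat) := {ffun 'I_m -> bool}.

Definition ANDS (m : nat) (S : {set 'I_m}) (z : input m) : bool :=
  [forall i in S, z i].

Definition indic (m : nat) (T : {set 'I_m}) : input m := [ffun i => i \in T].

(* Moebius coefficient of f at S, given by Moebius inversion:
   f~(S) = sum_{T subset S} (-1)^{|S \ T|} f(1_T).  This is the (unique)
   coefficient in the expansion f = sum_S f~(S) AND_S. *)
Definition mobius_coef (m : nat) (f : input m -> bool) (S : {set 'I_m}) : int :=
  (\sum_(T : {set 'I_m} | T \subset S)
     (-1) ^+ #|S :\: T| * (f (indic T))%:R)%R.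

Definition mobius_support (m : nat) (f : input m -> bool) : {set {set 'I_m}} :=
  [set S | mobius_coef f S != 0%R].

(* pattern of z: (AND_S(z))_{S in S_f}, encoded as the set of S in S_f with AND_S(z)=1 *)
Definition pattern (m : nat) (f : input m -> bool) (z : input m) : {set {set 'I_m}} :=
  [set S in mobius_support f | ANDS S z].

Definition PatM (m : nat) (f : input m -> bool) : nat :=
  #|[set pattern f z | z : input m]|.

(* ADDR_n with n = 2^k: variables 0..k-1 are the address bits x
   (x_i has weight 2^i), variables k..k+2^k-1 are the data bits y_0..y_{n-1}. *)
Definition bin (k : nat) (z : input (k + 2 ^ k)) : nat :=
  \sum_(i < k) z (lshift (2 ^ k) i) * 2 ^ i.

Definition ADDR (k : nat) (z : input (k + 2 ^ k)) : bool :=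
  [exists j : 'I_(2 ^ k), (val j == bin z) && z (rshift k j)].

(* Main.v *)
Require Import Defs.
From mathcomp Require Import all_boot all_order all_algebra.
From mathcomp Require Import zify.
Import GRing.Theory Num.Theory.


Lemma sum_split k (b : nat -> bool) :
  \sum_(i < k.+1) b i * 2 ^ i = b 0 + 2 * \sum_(i < k) b i.+1 * 2 ^ i.
Proof.
rewrite big_ord_recl /= expn0 muln1 big_distrr /=; congr (_ + _).
by apply: eq_bigr => i _; rewrite /bump /= add1n expnS mulnCA.
Qed.

Lemma sum_bits k j : j < 2 ^ k -> \sum_(i < k) odd (j %/ 2 ^ i) * 2 ^ i = j.
Proof.
elim: k j => [|k IH] j hj.
  by rewrite big_ord0; move: hj; rewrite expn0; case: j.
rewrite (sum_split k (fun i => odd (j %/ 2 ^ i))) /= expn0 divn1.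
have -> : \sum_(i < k) odd (j %/ 2 ^ i.+1) * 2 ^ i = \sum_(i < k) odd (j %/ 2 %/ 2 ^ i) * 2 ^ i.
  by apply: eq_bigr => i _; rewrite expnS divnMA.
rewrite IH; last by move: hj; rewrite expnS divn2; lia.
by rewrite divn2 mul2n odd_double_half.
Qed.

Lemma bits_sum k (b : nat -> bool) i0 : i0 < k ->
  odd ((\sum_(i < k) b i * 2 ^ i) %/ 2 ^ i0) = b i0.
Proof.
elim: k b i0 => [|k IH] b i0 // hi.
rewrite sum_split; case: i0 hi => [|i0] hi.
  by rewrite expn0 divn1 oddD oddM /=; case: (b 0).
have hb : b 0 < 2 by case: (b 0).
rewrite expnS divnMA addnC (mulnC 2) divnMDl // (divn_small hb) addn0.
exact: (IH (fun i => b i.+1)).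
Qed.

Section Main.
Variable k : nat.
Local Notation m := (k + 2 ^ k).

Lemma split_l (i : 'I_k) : split (lshift (2 ^ k) i) = inl i.
Proof. exact: (unsplitK (inl _ i)). Qed.
Lemma split_r (j : 'I_(2 ^ k)) : split (rshift k j) = inr j.
Proof. exact: (unsplitK (inr _ j)). Qed.

Definition Sj (j : 'I_(2 ^ k)) : {set 'I_m} :=
  [set v | if split v is inr j' then j' == j else true].
Definition T0 (j : 'I_(2 ^ k)) : {set 'I_m} :=
  [set v | match split v with inl i => odd (j %/ 2 ^ i) | inr j' => j' == j end].

Definition bT (T : {set 'I_m}) (n : nat) : bool :=
  if (insub n : option 'I_k) is Some i' then lshift (2 ^ k) i' \in T else false.

Lemma bin_eq (T : {set 'I_m}) :
  bin (indic T) = \sum_(i < k) bT T i * 2 ^ i.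
Proof. by apply: eq_bigr => i _; rewrite /bT valK ffunE. Qed.

Lemma coef_ne0 j : mobius_coef (@ADDR k) (Sj j) != 0%R.
Proof.
rewrite /mobius_coef (bigD1 (T0 j)) /=; last first.
  by apply/subsetP => v; rewrite !inE; case: (split v).
rewrite big1 ?addr0.
  have -> : ADDR (indic (T0 j)) = true.
    apply/existsP; exists j; rewrite ffunE inE split_r eqxx andbT.
    rewrite /bin.
    have -> : \sum_(i < k) indic (T0 j) (lshift (2 ^ k) i) * 2 ^ i
            = \sum_(i < k) odd (j %/ 2 ^ i) * 2 ^ i.
      by apply: eq_bigr => i _; rewrite ffunE inE split_l.
    by rewrite sum_bits.
  by rewrite mulr1 expf_eq0 oppr_eq0 oner_eq0 andbF.
move=> T /andP [hTS hT].
case hA: (ADDR (indic T)); last by rewrite mulr0.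
exfalso; move/negP: hT; apply; apply/eqP.
move/existsP: hA => [j' /andP [/eqP hb hin]].
rewrite ffunE in hin.
have := subsetP hTS _ hin; rewrite inE split_r => /eqP ej; subst j'.
apply/setP => v; rewrite inE.
have -> : v = unsplit (split v) by rewrite splitK.
case: (split v) => [i|j''] /=.
  by rewrite split_l hb bin_eq (@bits_sum _ (bT T)) // /bT valK.
rewrite split_r; case: eqP => [->|ne] //.
apply/negP => hv; have := subsetP hTS _ hv; rewrite inE.
by rewrite (unsplitK (inr _ j'')) => /eqP.
Qed.

Definition zy (y : {ffun 'I_(2 ^ k) -> bool}) : input m :=
  [ffun v => if split v is inr j then y j else true].

Lemma ANDS_S j y : ANDS (Sj j) (zy y) = y j.
Proof.
rewrite /ANDS; apply/forallP/idP.
  by move=> h; have := h (rshift k j); rewrite inE ffunE split_r eqxx.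
move=> hy v; apply/implyP; rewrite inE ffunE; case: (split v) => //= j' /eqP -> //.
Qed.

Lemma zy_inj : injective (fun y => pattern (@ADDR k) (zy y)).
Proof.
move=> y1 y2 /= H; apply/ffunP => j.
have := congr1 (fun P : {set {set 'I_m}} => Sj j \in P) H; rewrite /pattern !inE coef_ne0 /=.
by rewrite !ANDS_S.
Qed.

End Main.

Theorem claimA4 (k : nat) (hk : 1 <= k) : 2 ^ (2 ^ k) <= PatM (@ADDR k).
Proof.
rewrite /PatM.
have hs : [set pattern (@ADDR k) (zy k y) | y : {ffun 'I_(2 ^ k) -> bool}]
          \subset [set pattern (@ADDR k) z | z : input (k + 2 ^ k)].
  by apply/subsetP => P /imsetP [y _ ->]; apply/imsetP; exists (zy k y).
apply: leq_trans (subset_leq_card hs).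
by rewrite card_imset; [rewrite card_ffun card_bool card_ord | exact: zy_inj].
Qed.
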